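(* Let $\{x_i\}_{i\in[N]}$ be the global solution of the delayed consensus system described in the context, let $\beta>0$ and \[ F(t):=d_x(t)+\beta\int_{\max\{0,t-2\tau\}}^t e^{-(t-s)}\int_s^t\max_{i\in[N]}|\dot x_i(r)|\,\mathrm dr\,\mathrm ds,\qquad t\ge0. \] Then for all $i,j\in[N]$ and $t\ge2\tau$, \[ |x_j(t-\tau)-x_i(t-\sigma)|\le d_x(t-\tau)+\int_{t-\tau}^{t-\sigma}d_x(s-\tau)\,\mathrm ds+\beta^{-1}e^{2\tau}F(t-\sigma). \]
   Context: Let $N\ge2$, $d\ge1$ be integers, $[N]=\{1,\dots,N\}$, $0\le\sigma\le\tau$. Let $\psi:[0,\infty)\to[0,\infty)$ be continuous, nonincreasing, positive everywhere, with $\sup\psi\le1$. Given $x_i^0\in C([-\tau,0],\mathbb{R}^d)$, $\{x_i\}$ is the global solution (continuous on $[-\tau,\infty)$, continuously differentiable on $[0,\infty)$) of $\dot x_i(t)=\sum_{j\ne i}a_{ij}(t)(x_j(t-\tau)-x_i(t-\sigma))$ for $t>0$, with $a_{ij}(t)=\frac1{N-1}\psi(|x_i(t-\sigma)-x_j(t-\tau)|)$, and $x_i=x_i^0$ on $[-\tau,0]$. $d_x(t):=\max_{i,j\in[N]}|x_i(t)-x_j(t)|$. *)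

(* Defs.v *)
From Stdlib Require Import Reals Lra List.
From Coquelicot Require Import Coquelicot.
Open Scope R_scope.

(* Vectors of R^d are represented as functions nat -> R; only coordinates k < d matter. *)
Definition vec := nat -> R.

Definition lsum (l : list nat) (f : nat -> R) : R :=
  fold_right (fun j acc => f j + acc) 0 l.

(* Maximum over a list of indices (baseline 0; only applied to nonnegative quantities
   over the nonempty index set [N]). *)
Definition lmax (l : list nat) (f : nat -> R) : R :=
  fold_right (fun j acc => Rmax (f j) acc) 0 l.

Definition vnorm (d : nat) (v : vec) : R :=
  sqrt (lsum (seq 0 d) (fun k => (v k) ^ 2)).

Definition vdist (d : nat) (u v : vec) : R := vnorm d (fun k => u k - v k).

(* Index set [N] is represented by {0, ..., N-1}. *)
Definition idx (N : nat) : list nat := seq 0 N.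

Definition diam (N d : nat) (x : nat -> R -> vec) (t : R) : R :=
  lmax (idx N) (fun i => lmax (idx N) (fun j => vdist d (x i t) (x j t))).

Definition xdot (x : nat -> R -> vec) (i : nat) (r : R) : vec :=
  fun k => Derive (fun u => x i u k) r.

Definition maxvel (N d : nat) (x : nat -> R -> vec) (r : R) : R :=
  lmax (idx N) (fun i => vnorm d (xdot x i r)).

Definition Ffun (N d : nat) (x : nat -> R -> vec) (beta tau : R) (t : R) : R :=
  diam N d x t +
  beta * RInt (fun s => exp (- (t - s)) * RInt (fun r => maxvel N d x r) s t)
              (Rmax 0 (t - 2 * tau)) t.

Definition rhs (N d : nat) (psi : R -> R) (sigma tau : R) (x : nat -> R -> vec)
  (i : nat) (t : R) (k : nat) : R :=
  lsum (filter (fun j => negb (Nat.eqb j i)) (idx N))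
    (fun j => / INR (N - 1) * psi (vdist d (x i (t - sigma)) (x j (t - tau)))
              * (x j (t - tau) k - x i (t - sigma) k)).

Definition is_solution (N d : nat) (psi : R -> R) (sigma tau : R)
  (x : nat -> R -> vec) : Prop :=
  (forall i k t, (i < N)%nat -> (k < d)%nat -> -tau <= t ->
     filterlim (fun s => x i s k) (within (fun s => -tau <= s) (locally t))
               (locally (x i t k))) /\
  (forall i k t, (i < N)%nat -> (k < d)%nat -> 0 < t ->
     is_derive (fun s => x i s k) t (rhs N d psi sigma tau x i t k)).

(* Main.v *)
Require Import Defs.
From Stdlib Require Import Reals.
From Coquelicot Require Import Coquelicot.
From Stdlib Require Import Lra Lia List.
Open Scope R_scope.

Lemma lsum_ext l f g : (forall j, In j l -> f j = g j) -> lsum l f = lsum l g.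
Proof. induction l; simpl; intros H; auto. rewrite H; auto. rewrite IHl; auto. Qed.

Lemma lsum_plus l f g : lsum l (fun j => f j + g j) = lsum l f + lsum l g.
Proof. induction l; simpl; lra. Qed.

Lemma lsum_scal l c f : lsum l (fun j => c * f j) = c * lsum l f.
Proof. induction l; simpl; nra. Qed.

Lemma lsum_le l f g : (forall j, In j l -> f j <= g j) -> lsum l f <= lsum l g.
Proof. induction l; simpl; intros H; [lra|]. specialize (IHl (fun j h => H j (or_intror h))).
  specialize (H a (or_introl eq_refl)). lra. Qed.

Lemma lsum_nonneg l f : (forall j, In j l -> 0 <= f j) -> 0 <= lsum l f.
Proof. intros H. induction l; simpl; [lra|].
  specialize (IHl (fun j h => H j (or_intror h))). specialize (H a (or_introl eq_refl)). lra. Qed.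

Lemma lsum_const l c : lsum l (fun _ => c) = INR (length l) * c.
Proof. induction l; simpl length; simpl lsum. simpl; lra. rewrite IHl, S_INR; lra. Qed.

Lemma lmax_ge l f j : In j l -> f j <= lmax l f.
Proof. induction l; simpl; intros H; [tauto|]. destruct H as [<-|H].
  apply Rmax_l. eapply Rle_trans; [apply IHl; auto| apply Rmax_r]. Qed.

Lemma lmax_nonneg l f : 0 <= lmax l f.
Proof. induction l; simpl; [lra|]. eapply Rle_trans; [apply IHl| apply Rmax_r]. Qed.

Lemma lmax_ext l f g : (forall j, In j l -> f j = g j) -> lmax l f = lmax l g.
Proof. induction l; simpl; intros H; auto. rewrite H; auto. rewrite IHl; auto. Qed.

Lemma lsum_cons a l f : lsum (a::l) f = f a + lsum l f.
Proof. reflexivity. Qed.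

Lemma cs_sq l u v : (lsum l (fun k => u k * v k))^2 <=
   lsum l (fun k => (u k)^2) * lsum l (fun k => (v k)^2).
Proof.
  induction l; [simpl; lra|]. rewrite !lsum_cons.
  set (A := lsum l (fun k => u k * v k)) in *.
  set (P := lsum l (fun k => (u k)^2)) in *.
  set (Q := lsum l (fun k => (v k)^2)) in *.
  assert (HP : 0 <= P) by (apply lsum_nonneg; intros; nra).
  assert (HQ : 0 <= Q) by (apply lsum_nonneg; intros; nra).
  set (x := u a) in *. set (y := v a) in *.
  assert (H2 : (2*A*x*y)^2 <= (P*y^2 + Q*x^2)^2).
  { assert (0 <= (P*y^2 - Q*x^2)^2) by apply pow2_ge_0. 
    assert ((2*A*x*y)^2 = 4 * A^2 * (x^2*y^2)) by ring.
    assert (0 <= x^2*y^2) by (apply Rmult_le_pos; apply pow2_ge_0).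
    assert (A^2 * (x^2*y^2) <= P*Q*(x^2*y^2)) by (apply Rmult_le_compat_r; auto).
    assert ((P*y^2 + Q*x^2)^2 = (P*y^2 - Q*x^2)^2 + 4*(P*Q*(x^2*y^2))) by ring.
    lra. }
  assert (H3: 2*A*x*y <= P*y^2 + Q*x^2).
  { assert (0 <= P*y^2 + Q*x^2) by nra.
    set (z := 2*A*x*y) in *. set (S := P*y^2 + Q*x^2) in *.
    destruct (Rle_dec z S); auto. assert (S < z) by lra.
    assert (S*S < z*z) by (apply Rle_lt_trans with (S*z); nra). nra. }
  nra.
Qed.

Lemma vnorm_nonneg d u : 0 <= vnorm d u.
Proof. apply sqrt_pos. Qed.

Lemma sumsq_nonneg d u : 0 <= lsum (seq 0 d) (fun k => (u k)^2).
Proof. apply lsum_nonneg; intros; nra. Qed.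

Lemma vnorm_sq d u : (vnorm d u)^2 = lsum (seq 0 d) (fun k => (u k)^2).
Proof. unfold vnorm. rewrite <- Rsqr_pow2. apply Rsqr_sqrt, sumsq_nonneg. Qed.

Lemma cs d u v : lsum (seq 0 d) (fun k => u k * v k) <= vnorm d u * vnorm d v.
Proof.
  assert (H := cs_sq (seq 0 d) u v). rewrite <- !vnorm_sq in H.
  assert (0 <= vnorm d u) by apply vnorm_nonneg.
  assert (0 <= vnorm d v) by apply vnorm_nonneg.
  assert (0 <= vnorm d u * vnorm d v) by nra.
  destruct (Rle_dec (lsum (seq 0 d) (fun k => u k * v k)) (vnorm d u * vnorm d v)); auto.
  nra.
Qed.

Lemma vnorm_ext d u v : (forall k, (k < d)%nat -> u k = v k) -> vnorm d u = vnorm d v.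
Proof. intros H. unfold vnorm. f_equal. apply lsum_ext. intros j Hj.
  apply in_seq in Hj. rewrite H; auto; lia. Qed.

Lemma vnorm_le_sq d u a : 0 <= a -> lsum (seq 0 d) (fun k => (u k)^2) <= a^2 -> vnorm d u <= a.
Proof. intros Ha H. rewrite <- vnorm_sq in H. assert (0 <= vnorm d u) by apply vnorm_nonneg. nra. Qed.

Lemma vnorm_triangle d u v : vnorm d (fun k => u k + v k) <= vnorm d u + vnorm d v.
Proof.
  apply vnorm_le_sq. apply Rplus_le_le_0_compat; apply vnorm_nonneg.
  replace (lsum (seq 0 d) (fun k => (u k + v k)^2)) with
    (lsum (seq 0 d) (fun k => (u k)^2) + 2 * lsum (seq 0 d) (fun k => u k * v k) + lsum (seq 0 d) (fun k => (v k)^2)).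
  2:{ rewrite <- lsum_scal, <- !lsum_plus. apply lsum_ext; intros; ring. }
  rewrite <- !vnorm_sq. assert (H := cs d u v). nra.
Qed.

Lemma vnorm_scal d c u : vnorm d (fun k => c * u k) = Rabs c * vnorm d u.
Proof.
  unfold vnorm. rewrite <- sqrt_Rsqr_abs, <- sqrt_mult_alt.
  f_equal. rewrite <- lsum_scal. apply lsum_ext; intros. unfold Rsqr; ring.
  apply Rle_0_sqr.
Qed.

Lemma vnorm_zero d : vnorm d (fun _ => 0) = 0.
Proof. unfold vnorm. replace (lsum (seq 0 d) (fun k => 0 ^ 2)) with 0. apply sqrt_0.
  induction (seq 0 d); auto. rewrite lsum_cons, <- IHl; ring. Qed.

Lemma vnorm_sum d L (f : nat -> vec) :
  vnorm d (fun k => lsum L (fun j => f j k)) <= lsum L (fun j => vnorm d (f j)).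
Proof.
  induction L; simpl. rewrite vnorm_zero; lra.
  eapply Rle_trans. apply (vnorm_triangle d (f a) (fun k => lsum L (fun j => f j k))). lra.
Qed.

Lemma vdist_sym d u v : vdist d u v = vdist d v u.
Proof. unfold vdist, vnorm. f_equal. apply lsum_ext; intros; ring. Qed.

Lemma vdist_tri d u v w : vdist d u w <= vdist d u v + vdist d v w.
Proof. unfold vdist. eapply Rle_trans; [|apply (vnorm_triangle d (fun k => u k - v k) (fun k => v k - w k))].
  right. apply vnorm_ext; intros; ring. Qed.

Lemma vdist_self d u : vdist d u u = 0.
Proof. unfold vdist. rewrite <- (vnorm_zero d). apply vnorm_ext; intros; ring. Qed.

Lemma vdist_le_diam N d x t i j : (i < N)%nat -> (j < N)%nat -> vdist d (x i t) (x j t) <= diam N d x t.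
Proof. intros Hi Hj. unfold diam.
  eapply Rle_trans; [| apply (lmax_ge _ _ i)]. apply (lmax_ge _ (fun j => vdist d (x i t) (x j t)) j).
  unfold idx; apply in_seq; lia. unfold idx; apply in_seq; lia. Qed.

Lemma length_filter_ne N i : (i < N)%nat ->
  length (filter (fun j => negb (Nat.eqb j i)) (seq 0 N)) = (N - 1)%nat.
Proof.
  induction N; intros H; [lia|]. rewrite seq_S, filter_app, length_app. simpl.
  destruct (Nat.eq_dec i N) as [->|Hne].
  - rewrite Nat.eqb_refl. simpl.
    assert (forall l, (forall j, In j l -> j <> N) -> length (filter (fun j => negb (Nat.eqb j N)) l) = length l).
    { induction l as [|b l IH]; simpl; intros Hl; auto. destruct (Nat.eqb_spec b N). exfalso; eapply Hl; eauto.
      simpl. rewrite IH; auto. }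
    rewrite H0, length_seq. lia. intros j Hj; apply in_seq in Hj; lia.
  - rewrite IHN by lia. destruct (Nat.eqb_spec N i); [lia|]. simpl. lia.
Qed.

Lemma Rmax_formula a b : Rmax a b = (a + b + Rabs (a - b)) / 2.
Proof. unfold Rmax; destruct (Rle_dec a b); [rewrite Rabs_left1 by lra| rewrite Rabs_right by lra]; lra. Qed.

Lemma cont_plus (f g : R -> R) t : continuous f t -> continuous g t -> continuous (fun s => f s + g s) t.
Proof. intros; apply (continuous_plus f g); auto. Qed.
Lemma cont_mult (f g : R -> R) t : continuous f t -> continuous g t -> continuous (fun s => f s * g s) t.
Proof. intros; apply (continuous_mult f g); auto. Qed.
Lemma cont_opp (f : R -> R) t : continuous f t -> continuous (fun s => - f s) t.
Proof. intros; apply (continuous_opp f); auto. Qed.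
Lemma cont_minus (f g : R -> R) t : continuous f t -> continuous g t -> continuous (fun s => f s - g s) t.
Proof. intros. apply cont_plus; auto. apply cont_opp; auto. Qed.
Lemma cont_const (c : R) t : continuous (fun _ : R => c) t.
Proof. apply continuous_const. Qed.
Lemma cont_id t : continuous (fun s : R => s) t.
Proof. apply continuous_id. Qed.

Lemma cont_Rmax (f g : R -> R) t : continuous f t -> continuous g t -> continuous (fun s => Rmax (f s) (g s)) t.
Proof. intros. apply continuous_ext with (fun s => (f s + g s + Rabs (f s - g s)) * / 2).
  intros; rewrite Rmax_formula; reflexivity.
  apply cont_mult; [|apply cont_const]. apply cont_plus; [apply cont_plus; auto|].
  apply continuous_Rabs_comp. apply cont_minus; auto. Qed.

Lemma cont_lsum l (f : nat -> R -> R) t : (forall j, In j l -> continuous (f j) t) ->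
  continuous (fun s => lsum l (fun j => f j s)) t.
Proof. induction l; intros H. apply cont_const.
  apply cont_plus. apply H; left; auto. apply IHl; intros; apply H; right; auto. Qed.

Lemma cont_lmax l (f : nat -> R -> R) t : (forall j, In j l -> continuous (f j) t) ->
  continuous (fun s => lmax l (fun j => f j s)) t.
Proof. induction l; intros H. apply cont_const.
  apply cont_Rmax. apply H; left; auto. apply IHl; intros; apply H; right; auto. Qed.

Lemma cont_vnorm d (u : R -> vec) t : (forall k, (k < d)%nat -> continuous (fun s => u s k) t) ->
  continuous (fun s => vnorm d (u s)) t.
Proof. intros H. unfold vnorm. apply continuous_sqrt_comp.
  apply cont_lsum. intros j Hj. apply in_seq in Hj.
  apply continuous_ext with (fun s => u s j * (u s j * 1)). intros; simpl; ring.
  apply cont_mult. apply H; lia. apply cont_mult. apply H; lia. apply cont_const. Qed.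

Lemma cont_psi_comp (psi : R -> R) (f : R -> R) t :
  (forall r, 0 <= r -> filterlim psi (within (fun s => 0 <= s) (locally r)) (locally (psi r))) ->
  continuous f t -> (forall s, 0 <= f s) -> continuous (fun s => psi (f s)) t.
Proof. intros Hp Hf Hpos. unfold continuous.
  eapply filterlim_comp; [| apply Hp, Hpos].
  intros P HP. unfold within in HP. specialize (Hf _ HP). simpl in Hf.
  unfold filtermap. eapply filter_imp; [| exact Hf]. simpl. intros s Hs. apply Hs, Hpos. Qed.

Definition xt (tau : R) (x : nat -> R -> vec) : nat -> R -> vec :=
  fun i s k => x i (Rmax s (- tau)) k.

Lemma xt_eq tau x i s : -tau <= s -> xt tau x i s = x i s.
Proof. intros H. unfold xt. rewrite Rmax_left by lra. reflexivity. Qed.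

Lemma cont_xt N d tau x i k t :
  (forall i k t, (i < N)%nat -> (k < d)%nat -> -tau <= t ->
     filterlim (fun s => x i s k) (within (fun s => -tau <= s) (locally t))
               (locally (x i t k))) ->
  (i < N)%nat -> (k < d)%nat -> continuous (fun s => xt tau x i s k) t.
Proof. intros Hc Hi Hk. unfold continuous, xt.
  apply (filterlim_comp _ _ _ (fun s => Rmax s (-tau)) (fun y => x i y k) (locally t)
     (within (fun s => -tau <= s) (locally (Rmax t (-tau))))); [| apply Hc; auto; apply Rmax_r].
  intros P HP. unfold within in HP.
  assert (Hm : continuous (fun s => Rmax s (-tau)) t) by (apply cont_Rmax; [apply cont_id|apply cont_const]).
  specialize (Hm _ HP). unfold filtermap in *. eapply filter_imp; [| exact Hm]. simpl.
  intros s Hs. apply Hs, Rmax_r. Qed.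

Definition HcontT N d tau (x : nat -> R -> vec) :=
  forall i k t, (i < N)%nat -> (k < d)%nat -> -tau <= t ->
     filterlim (fun s => x i s k) (within (fun s => -tau <= s) (locally t))
               (locally (x i t k)).

Definition HpsiT (psi : R -> R) := forall r, 0 <= r ->
     filterlim psi (within (fun s => 0 <= s) (locally r)) (locally (psi r)).

Lemma in_L N i j : In j (filter (fun j => negb (Nat.eqb j i)) (idx N)) -> (j < N)%nat.
Proof. intros H. apply filter_In in H. destruct H as [H _]. unfold idx in H. apply in_seq in H; lia. Qed.

Lemma cont_xt_shift N d tau x i k c t : HcontT N d tau x -> (i < N)%nat -> (k < d)%nat ->
  continuous (fun r => xt tau x i (r - c) k) t.
Proof. intros Hc Hi Hk.
  apply (continuous_comp (fun r => r - c) (fun y => xt tau x i y k)).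
  apply cont_minus; [apply cont_id|apply cont_const].
  apply (cont_xt N d); auto. Qed.

Lemma cont_rhs N d psi sigma tau x i k t : HcontT N d tau x -> HpsiT psi -> (i < N)%nat -> (k < d)%nat ->
  continuous (fun r => rhs N d psi sigma tau (xt tau x) i r k) t.
Proof. intros Hc Hp Hi Hk. unfold rhs.
  apply (cont_lsum _ (fun j r => / INR (N - 1) * psi (vdist d (xt tau x i (r - sigma)) (xt tau x j (r - tau))) *
       (xt tau x j (r - tau) k - xt tau x i (r - sigma) k))).
  intros j Hj. apply in_L in Hj.
  apply cont_mult; [apply cont_mult; [apply cont_const|]|].
  - apply (cont_psi_comp psi (fun r => vdist d (xt tau x i (r - sigma)) (xt tau x j (r - tau)))); auto.
    unfold vdist. apply (cont_vnorm d (fun r k => xt tau x i (r - sigma) k - xt tau x j (r - tau) k)).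
    intros k' Hk'. apply cont_minus; apply (cont_xt_shift N d); auto.
    intros; apply vnorm_nonneg.
  - apply cont_minus; apply (cont_xt_shift N d); auto.
Qed.

Definition Mt N d psi sigma tau x r :=
  lmax (idx N) (fun i => vnorm d (rhs N d psi sigma tau (xt tau x) i r)).

Lemma cont_Mt N d psi sigma tau x t : HcontT N d tau x -> HpsiT psi ->
  continuous (Mt N d psi sigma tau x) t.
Proof. intros Hc Hp. unfold Mt.
  apply (cont_lmax _ (fun i r => vnorm d (rhs N d psi sigma tau (xt tau x) i r))).
  intros i Hi. unfold idx in Hi; apply in_seq in Hi.
  apply (cont_vnorm d (fun r => rhs N d psi sigma tau (xt tau x) i r)).
  intros; apply cont_rhs; auto; lia. Qed.

Lemma cont_Dt N d tau x c t : HcontT N d tau x ->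
  continuous (fun s => diam N d (xt tau x) (s - c)) t.
Proof. intros Hc. unfold diam.
  apply (cont_lmax _ (fun i s => lmax (idx N) (fun j => vdist d (xt tau x i (s - c)) (xt tau x j (s - c))))).
  intros i Hi. unfold idx in Hi; apply in_seq in Hi.
  apply (cont_lmax _ (fun j s => vdist d (xt tau x i (s - c)) (xt tau x j (s - c)))).
  intros j Hj. unfold idx in Hj; apply in_seq in Hj.
  unfold vdist. apply (cont_vnorm d (fun r k => xt tau x i (r - c) k - xt tau x j (r - c) k)).
  intros k Hk. apply cont_minus; apply (cont_xt_shift N d); auto; lia. Qed.

Lemma rhs_eq N d psi sigma tau x i r k : 0 <= sigma <= tau -> 0 <= r ->
  rhs N d psi sigma tau x i r k = rhs N d psi sigma tau (xt tau x) i r k.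
Proof. intros Hs Hr. unfold rhs. apply lsum_ext. intros j _.
  rewrite !xt_eq by lra. reflexivity. Qed.

Lemma diam_eq N d tau x s : -tau <= s -> diam N d x s = diam N d (xt tau x) s.
Proof. intros H. unfold diam. apply lmax_ext; intros; apply lmax_ext; intros.
  rewrite !xt_eq by lra. reflexivity. Qed.

Lemma rhs_bound N d psi sigma tau x i r : (2 <= N)%nat -> (i < N)%nat ->
  (forall r, 0 <= r -> 0 < psi r) -> (forall r, 0 <= r -> psi r <= 1) ->
  vnorm d (rhs N d psi sigma tau (xt tau x) i r) <=
  diam N d (xt tau x) (r - tau) + vdist d (xt tau x i (r - tau)) (xt tau x i (r - sigma)).
Proof.
  intros HN Hi Hp1 Hp2. set (X := xt tau x).
  set (B := diam N d X (r - tau) + vdist d (X i (r - tau)) (X i (r - sigma))).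
  set (L := filter (fun j => negb (Nat.eqb j i)) (idx N)).
  unfold rhs. fold L.
  eapply Rle_trans. apply (vnorm_sum d L (fun j k => / INR (N - 1) * psi (vdist d (X i (r - sigma)) (X j (r - tau))) *
       (X j (r - tau) k - X i (r - sigma) k))).
  assert (HN1 : 0 < INR (N - 1)) by (apply lt_0_INR; lia).
  eapply Rle_trans. apply (lsum_le L _ (fun _ => / INR (N - 1) * B)).
  - intros j Hj. assert (Hj' := in_L _ _ _ Hj).
    rewrite (vnorm_scal d _ (fun k => X j (r - tau) k - X i (r - sigma) k)).
    set (p := psi (vdist d (X i (r - sigma)) (X j (r - tau)))).
    assert (0 < p <= 1) by (split; [apply Hp1| apply Hp2]; apply vnorm_nonneg).
    rewrite Rabs_right by (apply Rle_ge, Rmult_le_pos; [left; apply Rinv_0_lt_compat; auto| lra]).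
    fold (vdist d (X j (r - tau)) (X i (r - sigma))).
    assert (H1 : vdist d (X j (r - tau)) (X i (r - sigma)) <= B).
    { eapply Rle_trans. apply (vdist_tri d _ (X i (r - tau))). unfold B.
      apply Rplus_le_compat_r. apply (vdist_le_diam N d X); auto. }
    assert (0 <= vdist d (X j (r - tau)) (X i (r - sigma))) by apply vnorm_nonneg.
    assert (0 < / INR (N - 1)) by (apply Rinv_0_lt_compat; auto).
    rewrite Rmult_assoc. apply Rmult_le_compat_l; [lra|]. nra.
  - rewrite lsum_const. unfold L, idx. rewrite length_filter_ne by auto.
    right. field. lra.
Qed.

Definition HderT N d psi sigma tau (x : nat -> R -> vec) :=
  forall i k t, (i < N)%nat -> (k < d)%nat -> 0 < t ->
     is_derive (fun s => x i s k) t (rhs N d psi sigma tau x i t k).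

Lemma is_derive_lsum l (f : nat -> R -> R) (df : nat -> R) r :
  (forall j, In j l -> is_derive (f j) r (df j)) ->
  is_derive (fun s => lsum l (fun j => f j s)) r (lsum l df).
Proof. induction l; intros H; simpl. apply (is_derive_const 0 r).
  apply (is_derive_plus (f a) (fun s => lsum l (fun j => f j s))).
  apply H; left; auto. apply IHl; intros; apply H; right; auto. Qed.

Lemma lsum_minus l f g : lsum l f - lsum l g = lsum l (fun j => f j - g j).
Proof. induction l; simpl; [ring|]. rewrite <- IHl. ring. Qed.

Lemma RInt_scal_R (g : R -> R) a b c : ex_RInt g a b -> RInt (fun r => c * g r) a b = c * RInt g a b.
Proof. intros H. exact (RInt_scal g a b c H). Qed.

Lemma mvt N d psi sigma tau x i p q :
  0 <= sigma <= tau -> HcontT N d tau x -> HpsiT psi -> HderT N d psi sigma tau x ->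
  (i < N)%nat -> p <= q -> (0 < p \/ p = q) ->
  vdist d (xt tau x i q) (xt tau x i p) <=
  RInt (fun r => vnorm d (rhs N d psi sigma tau (xt tau x) i r)) p q.
Proof.
  intros Hs Hc Hp Hd Hi Hpq Hcase. set (X := xt tau x).
  destruct Hcase as [Hp0| <-].
  2:{ subst X. rewrite vdist_self, RInt_point. right; reflexivity. }
  set (v := fun k => X i q k - X i p k).
  set (phi := fun r => lsum (seq 0 d) (fun k => v k * x i r k)).
  set (dphi := fun r => lsum (seq 0 d) (fun k => v k * rhs N d psi sigma tau X i r k)).
  assert (Hint : is_RInt dphi p q (minus (phi q) (phi p))).
  { apply (is_RInt_derive (V := R_CompleteNormedModule) phi dphi).
    - intros r Hr. rewrite Rmin_left, Rmax_right in Hr by lra.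
      unfold phi, dphi.
      apply (is_derive_lsum _ (fun k s => v k * x i s k)).
      intros k Hk. apply in_seq in Hk. apply is_derive_scal.
      unfold X. rewrite <- rhs_eq; [apply Hd; auto; [lia|lra] | auto | lra].
    - intros r _. unfold dphi.
      apply (cont_lsum _ (fun k r => v k * rhs N d psi sigma tau X i r k)).
      intros k Hk. apply in_seq in Hk. apply cont_mult. apply cont_const.
      apply cont_rhs; auto; lia. }
  assert (Hex : ex_RInt (fun r => vnorm d (rhs N d psi sigma tau X i r)) p q).
  { apply (ex_RInt_continuous (V := R_CompleteNormedModule)). intros z _.
    apply (cont_vnorm d (fun r => rhs N d psi sigma tau X i r)). intros; apply cont_rhs; auto. }
  assert (HI0 : 0 <= RInt (fun r => vnorm d (rhs N d psi sigma tau X i r)) p q).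
  { apply RInt_ge_0; auto. intros; apply vnorm_nonneg. }
  assert (Heq : RInt dphi p q = (vnorm d v)^2).
  { rewrite (is_RInt_unique _ _ _ _ Hint). rewrite vnorm_sq. unfold phi.
    change (minus ?a ?b) with (a - b). rewrite lsum_minus.
    apply lsum_ext. intros k _. unfold v, X. rewrite !xt_eq by lra. ring. }
  assert (Hle : RInt dphi p q <= vnorm d v * RInt (fun r => vnorm d (rhs N d psi sigma tau X i r)) p q).
  { rewrite <- RInt_scal_R by auto. apply RInt_le; auto.
    exists (minus (phi q) (phi p)); auto.
    apply ex_RInt_scal with (k := vnorm d v) in Hex. exact Hex.
    intros r _. apply cs. }
  assert (0 <= vnorm d v) by apply vnorm_nonneg.
  change (vdist d (X i q) (X i p)) with (vnorm d v).
  rewrite Heq in Hle. nra.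
Qed.

Lemma maxvel_eq N d psi sigma tau x r : 0 <= sigma <= tau -> HderT N d psi sigma tau x -> 0 < r ->
  maxvel N d x r = Mt N d psi sigma tau x r.
Proof. intros Hs Hd Hr. unfold maxvel, Mt. apply lmax_ext; intros i Hi.
  unfold idx in Hi; apply in_seq in Hi.
  apply vnorm_ext; intros k Hk.
  replace (xdot x i r k) with (rhs N d psi sigma tau x i r k). apply rhs_eq; auto; lra.
  symmetry. unfold xdot. apply is_derive_unique. apply Hd; auto; lia. Qed.

Lemma cont_H N d psi sigma tau x T z : HcontT N d tau x -> HpsiT psi ->
  continuous (fun s => RInt (Mt N d psi sigma tau x) s T) z.
Proof. intros Hc Hp. apply (ex_derive_continuous (K := R_AbsRing) (V := R_NormedModule)).
  exists (opp (Mt N d psi sigma tau x z)).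
  apply (is_derive_RInt' (V := R_NormedModule) (Mt N d psi sigma tau x) (fun s => RInt (Mt N d psi sigma tau x) s T) z T).
  apply filter_forall. intros s. apply (RInt_correct (V := R_CompleteNormedModule)).
  apply (ex_RInt_continuous (V := R_CompleteNormedModule)). intros; apply cont_Mt; auto.
  apply cont_Mt; auto. Qed.

Lemma Mt_nonneg N d psi sigma tau x r : 0 <= Mt N d psi sigma tau x r.
Proof. apply lmax_nonneg. Qed.

Lemma exR (f : R -> R) a b : (forall z, continuous f z) -> ex_RInt f a b.
Proof. intros H. apply (ex_RInt_continuous (V := R_CompleteNormedModule)). intros; apply H. Qed.

Lemma exp_ge1 y : 0 <= y -> 1 <= exp y.
Proof. intros H. destruct (Req_dec y 0) as [->|Hn]. rewrite exp_0; lra.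
  left. rewrite <- exp_0. apply exp_increasing. lra. Qed.

Lemma RInt_plus_R (f g : R -> R) a b : ex_RInt f a b -> ex_RInt g a b ->
  RInt (fun r => f r + g r) a b = RInt f a b + RInt g a b.
Proof. intros. exact (RInt_plus f g a b H H0). Qed.

Theorem lemma3p5
  (N d : nat) (sigma tau beta : R) (psi : R -> R) (x : nat -> R -> vec)
  (HN : (2 <= N)%nat) (Hd : (1 <= d)%nat)
  (Hsig : 0 <= sigma) (Hst : sigma <= tau)
  (Hpsi_cont : forall r, 0 <= r ->
     filterlim psi (within (fun s => 0 <= s) (locally r)) (locally (psi r)))
  (Hpsi_mono : forall r1 r2, 0 <= r1 -> r1 <= r2 -> psi r2 <= psi r1)
  (Hpsi_pos : forall r, 0 <= r -> 0 < psi r)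
  (Hpsi_le1 : forall r, 0 <= r -> psi r <= 1)
  (Hsol : is_solution N d psi sigma tau x)
  (Hbeta : 0 < beta) :
  forall i j t, (i < N)%nat -> (j < N)%nat -> 2 * tau <= t ->
    vdist d (x j (t - tau)) (x i (t - sigma)) <=
      diam N d x (t - tau)
      + RInt (fun s => diam N d x (s - tau)) (t - tau) (t - sigma)
      + / beta * exp (2 * tau) * Ffun N d x beta tau (t - sigma).
Proof.
  intros i j t Hi Hj Ht.
  destruct Hsol as [Hc Hder].
  assert (Hc' : HcontT N d tau x) by exact Hc.
  assert (Hd' : HderT N d psi sigma tau x) by exact Hder.
  assert (Hp : HpsiT psi) by exact Hpsi_cont.
  assert (Hs : 0 <= sigma <= tau) by lra.
  set (X := xt tau x).
  set (a := t - tau). set (T := t - sigma).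
  set (M := Mt N d psi sigma tau x).
  set (H := fun s => RInt M s T).
  set (h := fun s => exp (- (T - s)) * H s).
  set (lo := Rmax 0 (T - 2 * tau)).
  assert (cM : forall z, continuous M z) by (intros; apply cont_Mt; auto).
  assert (cH : forall z, continuous H z) by (intros; apply cont_H; auto).
  assert (ch : forall z, continuous h z).
  { intros z. apply cont_mult; auto. apply continuous_exp_comp.
    apply cont_opp, cont_minus; [apply cont_const|apply cont_id]. }
  assert (Hnn : forall s, s <= T -> 0 <= H s).
  { intros s Hs'. apply RInt_ge_0; auto. apply exR; auto. intros; apply Mt_nonneg. }
  assert (hnn : forall s, s <= T -> 0 <= h s).
  { intros s Hs'. unfold h. apply Rmult_le_pos; [left; apply exp_pos| auto]. }
  assert (Hlo1 : lo <= a - tau).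
  { unfold lo, a, T. apply Rmax_lub; lra. }
  assert (HF : Ffun N d x beta tau T = diam N d x T + beta * RInt h lo T).
  { unfold Ffun. fold lo. f_equal. f_equal. apply RInt_ext.
    intros s Hs'. rewrite Rmin_left, Rmax_right in Hs' by (unfold lo, T; apply Rmax_lub; lra).
    assert (0 < s) by (assert (0 <= lo) by apply Rmax_l; lra).
    unfold h, H. f_equal. apply RInt_ext. intros r Hr.
    rewrite Rmin_left, Rmax_right in Hr by lra.
    apply maxvel_eq; auto; lra. }
  assert (HB : RInt h (a - tau) (T - tau) <= RInt h lo T).
  { rewrite <- (RInt_Chasles (V := R_CompleteNormedModule) h lo (a - tau) T) by (apply exR; auto).
    rewrite <- (RInt_Chasles (V := R_CompleteNormedModule) h (a - tau) (T - tau) T) by (apply exR; auto).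
    change (plus ?u ?v) with (u + v).
    assert (0 <= RInt h lo (a - tau)).
    { apply RInt_ge_0; auto. apply exR; auto. intros; apply hnn; unfold a, T in *; lra. }
    assert (0 <= RInt h (T - tau) T).
    { apply RInt_ge_0. unfold T; lra. apply exR; auto. intros; apply hnn; lra. }
    change (plus ?u ?v) with (u + v). lra. }
  assert (HC : RInt (fun r => H (r - tau)) a T <= exp (2 * tau) * RInt h (a - tau) (T - tau)).
  { assert (Hsh : RInt (fun r => h (r - tau)) a T = RInt h (a - tau) (T - tau)).
    { rewrite <- (RInt_comp (V := R_CompleteNormedModule) h (fun r => r - tau) (fun _ => 1)).
      apply RInt_ext. intros; unfold scal; simpl; unfold mult; simpl; ring.
      intros; apply ch.
      intros; split. auto_derive; auto; ring. apply cont_const. }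
    rewrite <- Hsh. rewrite <- RInt_scal_R.
    2:{ apply exR. intros z. apply (continuous_comp (fun r => r - tau) h). apply cont_minus; [apply cont_id|apply cont_const]. apply ch. }
    apply RInt_le. unfold a, T; lra.
    apply exR. intros z. apply (continuous_comp (fun r => r - tau) H). apply cont_minus; [apply cont_id|apply cont_const]. apply cH.
    apply exR. intros z. apply cont_mult; [apply cont_const|]. apply (continuous_comp (fun r => r - tau) h). apply cont_minus; [apply cont_id|apply cont_const]. apply ch.
    intros r Hr. unfold h. rewrite <- Rmult_assoc, <- exp_plus.
    assert (1 <= exp (2 * tau + - (T - (r - tau)))) by (apply exp_ge1; unfold a, T in *; lra).
    assert (0 <= H (r - tau)) by (apply Hnn; unfold a, T in *; lra).
    nra. }
  assert (HD1 : vdist d (x j a) (x i T) <= diam N d x a + vdist d (X i T) (X i a)).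
  { eapply Rle_trans. apply (vdist_tri d _ (x i a)). apply Rplus_le_compat.
    apply vdist_le_diam; auto.
    rewrite vdist_sym. unfold X. rewrite !xt_eq by (unfold a, T; lra). lra. }
  assert (HD2 : vdist d (X i T) (X i a) <= RInt (fun r => vnorm d (rhs N d psi sigma tau X i r)) a T).
  { apply (mvt N d psi sigma tau x i a T); auto. unfold a, T; lra.
    destruct (Req_dec tau 0). right; unfold a, T; lra. left; unfold a; lra. }
  assert (HD3 : RInt (fun r => vnorm d (rhs N d psi sigma tau X i r)) a T <=
                RInt (fun r => diam N d X (r - tau) + H (r - tau)) a T).
  { apply RInt_le. unfold a, T; lra.
    apply exR. intros z. apply (cont_vnorm d (fun r => rhs N d psi sigma tau X i r)). intros; apply cont_rhs; auto.
    apply exR. intros z. apply cont_plus. apply (cont_Dt N d tau x tau z); auto.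
    apply (continuous_comp (fun r => r - tau) H). apply cont_minus; [apply cont_id|apply cont_const]. apply cH.
    intros r Hr. eapply Rle_trans. apply rhs_bound; auto. apply Rplus_le_compat_l.
    rewrite vdist_sym.
    eapply Rle_trans. apply (mvt N d psi sigma tau x i (r - tau) (r - sigma)); auto; [lra| left; unfold a in *; lra].
    eapply Rle_trans. apply RInt_le. lra.
    apply exR. intros z. apply (cont_vnorm d (fun r => rhs N d psi sigma tau X i r)). intros; apply cont_rhs; auto.
    apply (exR M); auto.
    intros y _. unfold M, Mt. apply (lmax_ge (idx N) (fun i => vnorm d (rhs N d psi sigma tau (xt tau x) i y)) i).
    unfold idx; apply in_seq; lia.
    unfold H. rewrite <- (RInt_Chasles (V := R_CompleteNormedModule) M (r - tau) (r - sigma) T) by (apply exR; auto).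
    change (plus ?u ?v) with (u + v).
    assert (0 <= RInt M (r - sigma) T).
    { apply RInt_ge_0. unfold T in *; lra. apply exR; auto. intros; apply Mt_nonneg. }
    lra. }
  rewrite (RInt_plus_R (fun r => diam N d X (r - tau)) (fun r => H (r - tau))) in HD3;
    [| apply exR; intros z; apply (cont_Dt N d tau x tau z); auto
     | apply exR; intros z; apply (continuous_comp (fun r => r - tau) H); [apply cont_minus; [apply cont_id|apply cont_const]|apply cH]].
  assert (HE : RInt (fun r => diam N d X (r - tau)) a T = RInt (fun s => diam N d x (s - tau)) a T).
  { apply RInt_ext. intros r Hr. rewrite Rmin_left, Rmax_right in Hr by (unfold a, T; lra).
    symmetry; apply diam_eq. unfold a in *; lra. }
  rewrite HE in HD3.
  fold a T. rewrite HF.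
  assert (0 <= diam N d x T) by apply lmax_nonneg.
  assert (Hex : 0 < exp (2 * tau)) by apply exp_pos.
  assert (Hfin : exp (2 * tau) * RInt h lo T <= / beta * exp (2 * tau) * (diam N d x T + beta * RInt h lo T)).
  { replace (/ beta * exp (2 * tau) * (diam N d x T + beta * RInt h lo T)) with
      (/ beta * exp (2 * tau) * diam N d x T + exp (2 * tau) * RInt h lo T) by (field; lra).
    assert (0 <= / beta * exp (2 * tau) * diam N d x T).
    { apply Rmult_le_pos; auto. apply Rmult_le_pos; lra || (left; apply Rinv_0_lt_compat; lra). }
    lra. }
  assert (exp (2 * tau) * RInt h (a - tau) (T - tau) <= exp (2 * tau) * RInt h lo T)
    by (apply Rmult_le_compat_l; lra).
  lra.
Qed.
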